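(* Let $D$ be a discrete space, $M$ a Hausdorff space and $\pi:D\to M$ a map. Then $D\cup_\pi M$ is countably pracompact if and only if $M$ is countably compact at some dense subset $A\subset M$ with $A\supset\pi(D)$.
   Context: For a discrete space $D$: if $D$ is infinite, $\alpha D=D\cup\{\infty\}$ denotes its one-point (Aleksandrov) compactification; if $D$ is finite, $\alpha D=D\cup\{\infty\}$ is the topological sum of $D$ and a singleton $\{\infty\}$ with $\infty\notin D$. For a map $\pi:D\to M$ into a $T_1$ space $M$, $D\cup_\pi M$ is the subspace $\{(x,\pi(x)):x\in D\}\cup(\{\infty\}\times M)$ of $\alpha D\times M$. A space $X$ is countably compact at a subset $A\subset X$ if every infinite subset $B\subset A$ has an accumulation point in $X$ (a point each neighborhood of which contains infinitely many points of $B$). A space $X$ is countably pracompact if it is countably compact at some dense subset of $X$. *)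

(* Defs.v *)
From Stdlib Require Import List Classical.
Set Implicit Arguments.

Definition finite_set {X : Type} (S : X -> Prop) : Prop :=
  exists l : list X, forall x, S x -> In x l.
Definition infinite_set {X : Type} (S : X -> Prop) : Prop := ~ finite_set S.
Definition finite_type (X : Type) : Prop := finite_set (fun _ : X => True).

Definition is_topology {X : Type} (opens : (X -> Prop) -> Prop) : Prop :=
  opens (fun _ => True) /\
  (forall U V, opens U -> opens V -> opens (fun x => U x /\ V x)) /\
  (forall F : (X -> Prop) -> Prop, (forall U, F U -> opens U) ->
      opens (fun x => exists U, F U /\ U x)).

Definition hausdorff {X : Type} (opens : (X -> Prop) -> Prop) : Prop :=
  forall x y : X, x <> y ->
    exists U V, opens U /\ opens V /\ U x /\ V y /\ (forall z, ~ (U z /\ V z)).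

Definition dense {X : Type} (opens : (X -> Prop) -> Prop) (A : X -> Prop) : Prop :=
  forall U, opens U -> (exists x, U x) -> exists a, A a /\ U a.

Definition accumulation_point {X : Type} (opens : (X -> Prop) -> Prop)
    (B : X -> Prop) (x : X) : Prop :=
  forall U, opens U -> U x -> infinite_set (fun b => B b /\ U b).

Definition countably_compact_at {X : Type} (opens : (X -> Prop) -> Prop)
    (A : X -> Prop) : Prop :=
  forall B : X -> Prop, (forall b, B b -> A b) -> infinite_set B ->
    exists x, accumulation_point opens B x.

Definition countably_pracompact {X : Type} (opens : (X -> Prop) -> Prop) : Prop :=
  exists A : X -> Prop, dense opens A /\ countably_compact_at opens A.

(* alpha D = D ∪ {∞}, with ∞ represented by None.  D carries the discrete topology.
   If D is infinite: one-point (Aleksandrov) compactification: every subset not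
   containing ∞ is open, a set containing ∞ is open iff its complement is finite.
   If D is finite: topological sum of D and {∞}, i.e. every subset is open. *)
Definition alpha_open (D : Type) (U : option D -> Prop) : Prop :=
  (finite_type D /\ True) \/
  (~ finite_type D /\ (U None -> finite_set (fun d : D => ~ U (Some d)))).

Definition prod_open {X Y : Type} (oX : (X -> Prop) -> Prop) (oY : (Y -> Prop) -> Prop)
    (W : X * Y -> Prop) : Prop :=
  forall p, W p -> exists U V, oX U /\ oY V /\ U (fst p) /\ V (snd p) /\
     (forall q, U (fst q) -> V (snd q) -> W q).

Definition subspace_open {X : Type} (oX : (X -> Prop) -> Prop) (S : X -> Prop)
    (W : {x : X | S x} -> Prop) : Prop :=
  exists O, oX O /\ forall s : {x : X | S x}, W s <-> O (proj1_sig s).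

(* The underlying set of D ∪_π M inside alpha D × M:
   {(x, π x) : x ∈ D} ∪ ({∞} × M). *)
Definition glue_set {D M : Type} (pi : D -> M) (p : option D * M) : Prop :=
  match fst p with
  | Some d => snd p = pi d
  | None => True
  end.

Definition glue_space {D M : Type} (pi : D -> M) : Type := {p : option D * M | glue_set pi p}.

Definition glue_open {D M : Type} (openM : (M -> Prop) -> Prop) (pi : D -> M) :
    (glue_space pi -> Prop) -> Prop :=
  subspace_open (prod_open (@alpha_open D) openM) (glue_set pi).
Arguments glue_open {D M} openM pi _.

(* Main.v *)
Require Import Defs.
From Stdlib Require Import List Classical ProofIrrelevance ClassicalEpsilon.

Lemma fin_sub {X} (A B : X -> Prop) : (forall x, A x -> B x) -> finite_set B -> finite_set A.
Proof. intros H [l Hl]; exists l; auto. Qed.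

Lemma fin_union {X} (A B : X -> Prop) : finite_set A -> finite_set B -> finite_set (fun x => A x \/ B x).
Proof. intros [l1 H1] [l2 H2]; exists (l1 ++ l2); intros x [h|h]; apply in_or_app; auto. Qed.

Lemma fin_image {X Y} (S : X -> Prop) (g : X -> Y) : finite_set S -> finite_set (fun y => exists x, S x /\ y = g x).
Proof. intros [l H]; exists (map g l); intros y [x [h ->]]; apply in_map; auto. Qed.

Lemma fin_pre {X Y} (S : X -> Prop) (T : Y -> Prop) (g : X -> Y) :
 (forall x, S x -> T (g x)) -> (forall x y, S x -> S y -> g x = g y -> x = y) -> finite_set T -> finite_set S.
Proof.
 intros HST Hinj [l Hl].
 assert (K: forall l (S : X -> Prop), (forall x y, S x -> S y -> g x = g y -> x = y) -> (forall x, S x -> In (g x) l) -> finite_set S).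
 { clear. induction l as [|y l IH]; intros S Hinj H.
   - exists nil; intros x hx; destruct (H x hx).
   - destruct (classic (exists x0, S x0 /\ g x0 = y)) as [[x0 [h0 e0]]|nx].
     + destruct (IH (fun x => S x /\ g x <> y)) as [l' Hl'].
       * intros a b [ha _] [hb _]; apply Hinj; auto.
       * intros x [hx ne]; destruct (H x hx); [congruence|auto].
       * exists (x0 :: l'); intros x hx. destruct (classic (g x = y)).
         -- left; apply Hinj; auto; congruence.
         -- right; apply Hl'; auto.
     + apply (IH S Hinj); intros x hx; destruct (H x hx); auto; exfalso; apply nx; eauto. }
 apply (K l S Hinj); intros x hx; apply Hl, HST, hx.
Qed.

Lemma pigeon {X Y} (S : X -> Prop) (h : X -> Y) (l : list Y) : infinite_set S ->
  (forall x, S x -> In (h x) l) -> exists y, infinite_set (fun x => S x /\ h x = y).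
Proof.
 unfold infinite_set. revert S. induction l as [|y l IH]; intros S HS H.
 - exfalso; apply HS; exists nil; intros x hx; destruct (H x hx).
 - destruct (classic (~ finite_set (fun x => S x /\ h x = y))) as [I|F]; [eauto|].
   apply NNPP in F.
   destruct (IH (fun x => S x /\ h x <> y)) as [y' Hy'].
   + intro Hf. apply HS. eapply fin_sub; [|apply (fin_union _ _ F Hf)].
     intros x hx; simpl; destruct (classic (h x = y)); auto.
   + intros x [hx ne]; destruct (H x hx); [congruence|auto].
   + exists y'; intro Hf; apply Hy'; eapply fin_sub; [|exact Hf]; simpl; tauto.
Qed.

Definition mkInf {D M} (pi : D -> M) (m : M) : glue_space pi := exist (glue_set pi) (None, m) I.
Definition mkD {D M} (pi : D -> M) (d : D) : glue_space pi := exist (glue_set pi) (Some d, pi d) eq_refl.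

Lemma glue_ext {D M} (pi : D -> M) (s s' : glue_space pi) : proj1_sig s = proj1_sig s' -> s = s'.
Proof. destruct s, s'; simpl; intros ->; f_equal; apply proof_irrelevance. Qed.

Lemma is_inf {D M} (pi : D -> M) (s : glue_space pi) :
  fst (proj1_sig s) = None -> s = mkInf pi (snd (proj1_sig s)).
Proof. destruct s as [[o m] h]; simpl; intros ->; apply glue_ext; reflexivity. Qed.

Lemma is_D {D M} (pi : D -> M) (s : glue_space pi) d :
  fst (proj1_sig s) = Some d -> s = mkD pi d.
Proof. destruct s as [[o m] h]; simpl; intros ->. change (m = pi d) in h. subst m; apply glue_ext; reflexivity. Qed.

Lemma alpha_True D : @alpha_open D (fun _ => True).
Proof. unfold alpha_open; destruct (classic (finite_type D)); [left|right]; split; auto.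
  intros _; exists nil; intros d h; exfalso; apply h; trivial. Qed.

Lemma open_snd {D M} (openM : (M -> Prop) -> Prop) (pi : D -> M) V : openM V ->
  glue_open openM pi (fun s => V (snd (proj1_sig s))).
Proof. intros hV. exists (fun q => V (snd q)); split; [|tauto].
  intros p hp; exists (fun _ => True), V; repeat split; auto using alpha_True. Qed.

Lemma open_Some {D M} (openM : (M -> Prop) -> Prop) (pi : D -> M) d : is_topology openM ->
  glue_open openM pi (fun s => fst (proj1_sig s) = Some d).
Proof. intros [HT _]. exists (fun q => fst q = Some d); split; [|tauto].
  intros p hp; exists (fun o => o = Some d), (fun _ => True); repeat split; auto.
  unfold alpha_open; destruct (classic (finite_type D)); [left|right]; split; auto.
  intro h; discriminate. Qed.

Lemma acc_None {D M} (openM : (M -> Prop) -> Prop) (pi : D -> M) B p : is_topology openM ->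
  accumulation_point (glue_open openM pi) B p -> fst (proj1_sig p) = None.
Proof. intros HT Hacc. destruct (fst (proj1_sig p)) as [d|] eqn:E; auto. exfalso.
  apply (Hacc _ (open_Some openM pi d HT) E). exists (p :: nil). intros b [_ hb]. left.
  rewrite (is_D pi b d hb), (is_D pi p d E). reflexivity. Qed.

Theorem proposition1p6 (D M : Type) (openM : (M -> Prop) -> Prop)
  (HtopM : is_topology openM) (HhausM : hausdorff openM) (pi : D -> M) :
  countably_pracompact (glue_open openM pi) <->
  exists A : M -> Prop,
    dense openM A /\ (forall d : D, A (pi d)) /\ countably_compact_at openM A.
Proof.
  split.
  - intros [A' [Hd Hcc]].
    assert (AD: forall d, A' (mkD pi d)).
    { intro d. destruct (Hd _ (open_Some openM pi d HtopM) (ex_intro _ (mkD pi d) eq_refl)) as [a [ha e]].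
      rewrite <- (is_D pi a d e); auto. }
    exists (fun m => A' (mkInf pi m) \/ exists d, m = pi d). split; [|split].
    + intros V hV [m hm].
      destruct (Hd _ (open_snd openM pi V hV) (ex_intro _ (mkInf pi m) hm)) as [a [ha hVa]].
      exists (snd (proj1_sig a)). split; auto.
      destruct (fst (proj1_sig a)) as [d|] eqn:E.
      * right; exists d. rewrite (is_D pi a d E). reflexivity.
      * left; rewrite <- (is_inf pi a E); auto.
    + intro d; right; eauto.
    + intros B HB HBi.
      destruct (classic (infinite_set (fun m => B m /\ A' (mkInf pi m)))) as [I1|F1].
      * set (B' := fun s : glue_space pi => fst (proj1_sig s) = None /\ B (snd (proj1_sig s)) /\ A' s).
        destruct (Hcc B') as [p Hp].
        -- intros b hb; apply hb.
        -- intro Hf; apply I1. apply (fin_pre _ B' (mkInf pi)); [| |exact Hf].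
           ++ intros m [hm ha]; unfold B'; simpl; auto.
           ++ intros x y _ _ e; exact (f_equal (fun s => snd (proj1_sig s)) e).
        -- exists (snd (proj1_sig p)). intros V hV hx Hf.
           apply (Hp _ (open_snd openM pi V hV) hx).
           apply (fin_pre _ (fun m => B m /\ V m) (fun s => snd (proj1_sig s))); [| |exact Hf].
           ++ intros b [[_ [hb _]] hv]; auto.
           ++ intros x y [[ex _] _] [[ey _] _] e.
              rewrite (is_inf pi x ex), (is_inf pi y ey), e; reflexivity.
      * assert (I2: infinite_set (fun m => B m /\ ~ A' (mkInf pi m))).
        { intro F2; apply HBi. unfold infinite_set in F1. apply NNPP in F1.
          eapply fin_sub; [|apply (fin_union _ _ F1 F2)].
          intros m hm; simpl; destruct (classic (A' (mkInf pi m))); auto. }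
        destruct (classic (exists m, B m /\ ~ A' (mkInf pi m))) as [[m0 [hm0 hn0]]|ne];
          [|exfalso; apply I2; exists nil; intros m hm; apply ne; eauto].
        destruct (HB m0 hm0) as [c|[d0 _]]; [contradiction|].
        set (f := fun m => epsilon (inhabits d0) (fun d => pi d = m)).
        assert (B2D: forall m, B m /\ ~ A' (mkInf pi m) -> pi (f m) = m).
        { intros m [hm hn]. destruct (HB m hm) as [c|[d e]]; [contradiction|].
          unfold f; apply (epsilon_spec (inhabits d0) (fun d => pi d = m)); exists d; auto. }
        set (B'' := fun s => exists m, (B m /\ ~ A' (mkInf pi m)) /\ s = mkD pi (f m)).
        destruct (Hcc B'') as [p Hp].
        -- intros b [m [_ ->]]; apply AD.
        -- intro Hfin; apply I2. apply (fin_pre _ B'' (fun m => mkD pi (f m))); [| |exact Hfin].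
           ++ intros m hm; exists m; auto.
           ++ intros x y hx hy e.
              transitivity (pi (f x)); [symmetry; apply B2D; auto|].
              transitivity (pi (f y)); [|apply B2D; auto].
              exact (f_equal (fun s => snd (proj1_sig s)) e).
        -- exists (snd (proj1_sig p)). intros V hV hx Hfin.
           apply (Hp _ (open_snd openM pi V hV) hx).
           apply (fin_pre _ (fun m => B m /\ V m) (fun s => snd (proj1_sig s))); [| |exact Hfin].
           ++ intros b [[m [hm ->]] hv]. simpl in hv |- *. rewrite (B2D m hm) in hv |- *.
              split; [apply hm|exact hv].
           ++ intros x y [[mx [hmx ->]] _] [[my [hmy ->]] _] e. simpl in e.
              rewrite (B2D _ hmx), (B2D _ hmy) in e. subst; reflexivity.
  - intros [A [Hd [HAd Hcc]]].
    exists (fun s => A (snd (proj1_sig s))). split.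
    + intros W [O [HO HW]] [s hs].
      destruct (HO _ (proj1 (HW s) hs)) as [U [V [hU [hV [hUs [hVs Hrect]]]]]].
      destruct (fst (proj1_sig s)) as [d|] eqn:E.
      * exists s; split; auto. rewrite (is_D pi s d E); simpl; apply HAd.
      * destruct (Hd V hV (ex_intro _ _ hVs)) as [a [ha hva]].
        exists (mkInf pi a); split; auto. apply HW. apply Hrect; simpl; auto; try (rewrite E in hUs; exact hUs).
    + intros B HB HBi.
      assert (Kacc: ~ finite_type D -> forall (F : D -> Prop) x,
        (forall d, F d -> B (mkD pi d)) ->
        (forall V, openM V -> V x -> infinite_set (fun d => F d /\ V (pi d))) ->
        accumulation_point (glue_open openM pi) B (mkInf pi x)).
      { intros HD F x HF HV W [O [HO HW]] hW Hfin.
        destruct (HO _ (proj1 (HW _) hW)) as [U [V [hU [hV [hUx [hVx Hrect]]]]]].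
        simpl in hUx, hVx. destruct hU as [[HDf _]|[_ HUc]]; [contradiction|].
        destruct (HUc hUx) as [C HC]. apply (HV V hV hVx).
        assert (F2: finite_set (fun d => B (mkD pi d) /\ W (mkD pi d))).
        { apply (fin_pre _ (fun b => B b /\ W b) (mkD pi)); [intros d h; exact h| |exact Hfin].
          intros a b _ _ e. apply (f_equal (fun s => fst (proj1_sig s))) in e; simpl in e; congruence. }
        assert (F1: finite_set (fun d => ~ U (Some d))) by (exists C; exact HC).
        eapply fin_sub; [|apply (fin_union _ _ F1 F2)].
        intros d [hF hv]; simpl.
        destruct (classic (U (Some d))); [right|left; auto]. split; auto.
        apply HW, Hrect; simpl; auto. }
      destruct (classic (infinite_set (fun s => B s /\ fst (proj1_sig s) = None))) as [I1|F1].
      * set (E := fun m => B (mkInf pi m)). destruct (Hcc E) as [x Hx].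
        -- intros m hm; exact (HB _ hm).
        -- intro Hf; apply I1. apply (fin_pre _ E (fun s => snd (proj1_sig s))); [| |exact Hf].
           ++ intros s [hs e]; unfold E; rewrite <- (is_inf pi s e); auto.
           ++ intros a b [_ ea] [_ eb] e; rewrite (is_inf pi a ea), (is_inf pi b eb), e; reflexivity.
        -- exists (mkInf pi x). intros W [O [HO HW]] hW Hfin.
           destruct (HO _ (proj1 (HW _) hW)) as [U [V [hU [hV [hUx [hVx Hrect]]]]]].
           simpl in hUx, hVx. apply (Hx V hV hVx).
           apply (fin_pre _ (fun b => B b /\ W b) (mkInf pi)); [| |exact Hfin].
           ++ intros m [hm hv]; split; auto; apply HW, Hrect; simpl; auto.
           ++ intros a b _ _ e; exact (f_equal (fun s => snd (proj1_sig s)) e).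
      * assert (I2: infinite_set (fun s => B s /\ fst (proj1_sig s) <> None)).
        { intro F2; apply HBi. unfold infinite_set in F1. apply NNPP in F1.
          eapply fin_sub; [|apply (fin_union _ _ F1 F2)].
          intros m hm; simpl; destruct (classic (fst (proj1_sig m) = None)); auto. }
        set (F := fun d => B (mkD pi d)).
        assert (FI: infinite_set F).
        { intro Hf; apply I2. eapply fin_sub; [|apply (fin_image F (mkD pi) Hf)].
          intros s [hs ne]. destruct (fst (proj1_sig s)) as [d|] eqn:E; [|congruence].
          exists d; split; [unfold F; rewrite <- (is_D pi s d E); auto| apply is_D; auto]. }
        assert (HD: ~ finite_type D) by (intros [l Hl]; apply FI; exists l; auto).
        destruct (classic (infinite_set (fun m => exists d, F d /\ m = pi d))) as [IE|FE].
        -- destruct (Hcc _ (fun m hm => match hm with ex_intro _ d (conj _ e) =>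
               eq_ind_r A (HAd d) e end) IE) as [x Hx].
           exists (mkInf pi x). apply (Kacc HD F x); [intros; auto|].
           intros V hV hx Hf. apply (Hx V hV hx).
           eapply fin_sub; [|apply (fin_image _ pi Hf)].
           intros m [[d [hd ->]] hv]; exists d; auto.
        -- unfold infinite_set in FE. apply NNPP in FE. destruct FE as [l Hl].
           destruct (pigeon F pi l FI) as [m Hm].
           { intros d hd; apply Hl; eauto. }
           exists (mkInf pi m). apply (Kacc HD F m); [intros; auto|].
           intros V hV hm Hf; apply Hm. eapply fin_sub; [|exact Hf].
           intros d [hd e]; split; auto; rewrite e; auto.
Qed.
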